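(* Let $f$ be a homeomorphism of a compact metric space $(X,d^X)$. If $x\in X$ is a minimally expansive point of $f$ which is also a shadowable point of $f$, then $x$ is a topologically stable point of $f$ and a GH-stable point of $f$.
   Context: $B(x,\epsilon)$ is the open ball, $\mathcal{O}_f(x)=\{f^n(x):n\in\mathbb{Z}\}$. $f$ is expansive on $A\subset X$ with constant $\mathfrak{c}$ if for all distinct $a,b\in A$ there is $n\in\mathbb{Z}$ with $d(f^n(a),f^n(b))>\mathfrak{c}$. $x$ is minimally expansive for $f$ if there is $\mathfrak{c}>0$ such that for each $y\in B(x,\mathfrak{c})$, $f$ is expansive on $\overline{\mathcal{O}_f(y)}$ with constant $\mathfrak{c}$. A $\delta$-pseudo orbit for $f$ through $x$ is a sequence $\{x_n\}_{n\in\mathbb{Z}}$ with $x_0=x$ and $d(f(x_n),x_{n+1})<\delta$ for all $n$; it is $\epsilon$-traced if there is $y$ with $d(f^n(y),x_n)<\epsilon$ for all $n\in\mathbb{Z}$. $x$ is a shadowable point of $f$ if for every $\epsilon>0$ there is $\delta>0$ such that every $\delta$-pseudo orbit for $f$ through $x$ is $\epsilon$-traced by some point of $X$. For maps $f,\bar f:X\to Y$, $d_{C^0}(f,\bar f)=\sup_{x}d^Y(f(x),\bar f(x))$. $x$ is a topologically stable point of $f$ if for every $\epsilon>0$ there is $\delta>0$ such that for every homeomorphism $g$ of $X$ with $d_{C^0}(f,g)\le\delta$ there is a continuous $h:\overline{\mathcal{O}_g(x)}\to X$ with $f\circ h=h\circ g$ and $d(h(z),z)\le\epsilon$ for all $z\in\overline{\mathcal{O}_g(x)}$.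 For $A,B\subset X$, $d^X(A,B)=\inf\{d^X(a,b):a\in A,b\in B\}$ and the Hausdorff distance is $d^X_H(A,B)=\max\{\sup_{a\in A}d^X(a,B),\sup_{b\in B}d^X(A,b)\}$. For compact metric spaces $(X,d^X),(Y,d^Y)$ and $\delta>0$, a map $i:X\to Y$ (not necessarily continuous) is a $\delta$-isometry if $\max\{d^Y_H(i(X),Y),\sup_{x,x'\in X}|d^Y(i(x),i(x'))-d^X(x,x')|\}<\delta$. For homeomorphisms $f$ of $X$ and $g$ of $Y$, $d_{GH^0}(f,g)=\inf\{\delta>0:$ there exist $\delta$-isometries $i:X\to Y$, $j:Y\to X$ with $d_{C^0}(g\circ i,i\circ f)<\delta$ and $d_{C^0}(j\circ g,f\circ j)<\delta\}$. $x$ is a GH-stable point of $f$ if for every $\epsilon>0$ there is $\delta>0$ such that for every compact metric space $(Y,d^Y)$ and every homeomorphism $g$ of $Y$ with $d_{GH^0}(f,g)<\delta$, there is an $\epsilon$-isometry $j:Y\to X$ such that for each $y\in j^{-1}(x)$ there is a continuous $h:\overline{\mathcal{O}_g(y)}\to X$ with $d^X(h(z),j(z))<\epsilon$ for all $z\in\overline{\mathcal{O}_g(y)}$ and $f\circ h=h\circ g$. *)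

(* Defs.v *)
From Stdlib Require Import Reals ZArith List.
Open Scope R_scope.

Record MetricSpace := {
  carrier :> Type;
  dist : carrier -> carrier -> R;
  dist_nonneg : forall x y, 0 <= dist x y;
  dist_sym : forall x y, dist x y = dist y x;
  dist_tri : forall x y z, dist x z <= dist x y + dist y z;
  dist_eq0 : forall x y, dist x y = 0 <-> x = y
}.
Arguments dist {m}.

Section Metric.
Variable X : MetricSpace.

Definition ball (x : X) (eps : R) : X -> Prop := fun y => dist x y < eps.

Definition is_open (U : X -> Prop) : Prop :=
  forall x, U x -> exists e, 0 < e /\ forall y, dist x y < e -> U y.

Definition compact_space : Prop :=
  forall (I : Type) (U : I -> X -> Prop),
    (forall i, is_open (U i)) -> (forall x, exists i, U i x) ->
    exists l : list I, forall x, exists i, In i l /\ U i x.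

Definition closure (A : X -> Prop) : X -> Prop :=
  fun z => forall eps, 0 < eps -> exists a, A a /\ dist z a < eps.

End Metric.
Arguments ball {X}.
Arguments closure {X}.

Definition continuous_on {X Y : MetricSpace} (S : X -> Prop) (h : X -> Y) : Prop :=
  forall z, S z -> forall eps, 0 < eps -> exists del, 0 < del /\
    forall w, S w -> dist z w < del -> dist (h z) (h w) < eps.

Definition continuous_map {X Y : MetricSpace} (h : X -> Y) : Prop :=
  continuous_on (fun _ => True) h.

Record Homeo (X : MetricSpace) := {
  hfun :> X -> X;
  hinv : X -> X;
  hfun_cont : continuous_map hfun;
  hinv_cont : continuous_map hinv;
  hinv_l : forall x, hinv (hfun x) = x;
  hinv_r : forall x, hfun (hinv x) = x
}.
Arguments hinv {X}.

Definition iterZ {X : MetricSpace} (f : Homeo X) (n : Z) : X -> X :=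
  match n with
  | Z0 => fun x => x
  | Zpos p => Nat.iter (Pos.to_nat p) (hfun X f)
  | Zneg p => Nat.iter (Pos.to_nat p) (hinv f)
  end.

Definition orbit {X : MetricSpace} (f : Homeo X) (x : X) : X -> Prop :=
  fun y => exists n : Z, y = iterZ f n x.

Definition expansive_on {X : MetricSpace} (f : Homeo X) (A : X -> Prop) (c : R) : Prop :=
  forall a b, A a -> A b -> a <> b -> exists n : Z, dist (iterZ f n a) (iterZ f n b) > c.

Definition minimally_expansive {X : MetricSpace} (f : Homeo X) (x : X) : Prop :=
  exists c, 0 < c /\ forall y, ball x c y -> expansive_on f (closure (orbit f y)) c.

Definition pseudo_orbit {X : MetricSpace} (f : Homeo X) (del : R) (x : X) (xs : Z -> X) : Prop :=
  xs 0%Z = x /\ forall n : Z, dist (f (xs n)) (xs (n + 1)%Z) < del.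

Definition traced {X : MetricSpace} (f : Homeo X) (eps : R) (xs : Z -> X) : Prop :=
  exists y, forall n : Z, dist (iterZ f n y) (xs n) < eps.

Definition shadowable {X : MetricSpace} (f : Homeo X) (x : X) : Prop :=
  forall eps, 0 < eps -> exists del, 0 < del /\
    forall xs, pseudo_orbit f del x xs -> traced f eps xs.

Definition dC0_le {X Y : MetricSpace} (f g : X -> Y) (del : R) : Prop :=
  forall x, dist (f x) (g x) <= del.

Definition topologically_stable {X : MetricSpace} (f : Homeo X) (x : X) : Prop :=
  forall eps, 0 < eps -> exists del, 0 < del /\
    forall g : Homeo X, dC0_le f g del ->
      exists h : X -> X,
        continuous_on (closure (orbit g x)) h /\
        (forall z, closure (orbit g x) z -> f (h z) = h (g z)) /\
        (forall z, closure (orbit g x) z -> dist (h z) z <= eps).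

Definition is_glb (A : R -> Prop) (s : R) : Prop :=
  (forall y, A y -> s <= y) /\ (forall t, (forall y, A y -> t <= y) -> t <= s).

Definition sup_lt (A : R -> Prop) (del : R) : Prop :=
  exists s, is_lub A s /\ s < del.

Definition dist_pt_set {X : MetricSpace} (a : X) (B : X -> Prop) (r : R) : Prop :=
  is_glb (fun v => exists b, B b /\ v = dist a b) r.

Definition is_hausdorff {X : MetricSpace} (A B : X -> Prop) (h : R) : Prop :=
  exists s1 s2,
    is_lub (fun r => exists a, A a /\ dist_pt_set a B r) s1 /\
    is_lub (fun r => exists b, B b /\ dist_pt_set b A r) s2 /\
    h = Rmax s1 s2.

Definition is_isometry_approx {X Y : MetricSpace} (i : X -> Y) (del : R) : Prop :=
  exists h s,
    is_hausdorff (fun y => exists x, y = i x) (fun _ => True) h /\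
    is_lub (fun v => exists x x', v = Rabs (dist (i x) (i x') - dist x x')) s /\
    Rmax h s < del.

Definition dC0_lt {X Y : MetricSpace} (u v : X -> Y) (del : R) : Prop :=
  sup_lt (fun r => exists x, r = dist (u x) (v x)) del.

Definition GH0_admissible {X Y : MetricSpace} (f : Homeo X) (g : Homeo Y) (del : R) : Prop :=
  0 < del /\ exists (i : X -> Y) (j : Y -> X),
    is_isometry_approx i del /\ is_isometry_approx j del /\
    dC0_lt (fun x => g (i x)) (fun x => i (f x)) del /\
    dC0_lt (fun y => j (g y)) (fun y => f (j y)) del.

(* d_{GH^0}(f,g) < del : the infimum of the admissible set is < del,
   which (by definition of infimum) means some admissible value is < del *)
Definition dGH0_lt {X Y : MetricSpace} (f : Homeo X) (g : Homeo Y) (del : R) : Prop :=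
  exists del', GH0_admissible f g del' /\ del' < del.

Definition GH_stable {X : MetricSpace} (f : Homeo X) (x : X) : Prop :=
  forall eps, 0 < eps -> exists del, 0 < del /\
    forall (Y : MetricSpace) (g : Homeo Y), compact_space Y -> dGH0_lt f g del ->
      exists j : Y -> X, is_isometry_approx j eps /\
        forall y, j y = x ->
          exists h : Y -> X,
            continuous_on (closure (orbit g y)) h /\
            (forall z, closure (orbit g y) z -> dist (h z) (j z) < eps) /\
            (forall z, closure (orbit g y) z -> f (h z) = h (g z)).

(* Main.v *)
Require Import Defs.
From Stdlib Require Import Reals ZArith List Lra Lia Classical ClassicalEpsilon.
Open Scope R_scope.
Require Import Defs.

Lemma my_choice {A B : Type} (P : A -> B -> Prop) :
  (forall a, exists b, P a b) -> exists g, forall a, P a (g a).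
Proof.
  intros H. exists (fun a => proj1_sig (constructive_indefinite_description _ (H a))).
  intro a. exact (proj2_sig (constructive_indefinite_description _ (H a))).
Qed.

Lemma iterZ_nat {X : MetricSpace} (f : Homeo X) k x :
  iterZ f (Z.of_nat k) x = Nat.iter k (hfun X f) x.
Proof.
  destruct k; simpl; [reflexivity|]. rewrite SuccNat2Pos.id_succ. reflexivity.
Qed.

Lemma iterZ_negnat {X : MetricSpace} (f : Homeo X) k x :
  iterZ f (- Z.of_nat k) x = Nat.iter k (hinv f) x.
Proof.
  destruct k; simpl; [reflexivity|]. rewrite SuccNat2Pos.id_succ. reflexivity.
Qed.

Lemma Z_cases (n : Z) : exists k, n = Z.of_nat k \/ n = (- Z.of_nat (S k))%Z.
Proof.
  destruct (Z_le_gt_dec 0 n).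
  - exists (Z.to_nat n). left. lia.
  - exists (Z.to_nat (- n - 1)). right. lia.
Qed.

Lemma iterZ_succ {X : MetricSpace} (f : Homeo X) n x :
  iterZ f (n + 1) x = f (iterZ f n x).
Proof.
  destruct (Z_cases n) as [k [-> | ->]].
  - replace (Z.of_nat k + 1)%Z with (Z.of_nat (S k)) by lia.
    rewrite !iterZ_nat. reflexivity.
  - replace (- Z.of_nat (S k) + 1)%Z with (- Z.of_nat k)%Z by lia.
    rewrite !iterZ_negnat. simpl. rewrite hinv_r. reflexivity.
Qed.

Lemma iterZ_pred {X : MetricSpace} (f : Homeo X) n x :
  iterZ f (n - 1) x = hinv f (iterZ f n x).
Proof.
  pattern n at 2. replace n with ((n - 1) + 1)%Z at 1 by lia.
  rewrite iterZ_succ, hinv_l. reflexivity.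
Qed.

Lemma iterZ_add {X : MetricSpace} (f : Homeo X) m n x :
  iterZ f (m + n) x = iterZ f m (iterZ f n x).
Proof.
  induction m using Z.peano_ind.
  - reflexivity.
  - replace (Z.succ m + n)%Z with ((m + n) + 1)%Z by lia.
    rewrite Z.add_1_r, <- Z.add_1_r, !iterZ_succ, IHm. rewrite <- Z.add_1_r. rewrite iterZ_succ. reflexivity.
  - replace (Z.pred m + n)%Z with ((m + n) - 1)%Z by lia.
    rewrite <- Z.sub_1_r, !iterZ_pred, IHm. reflexivity.
Qed.

Lemma iterZ_1 {X : MetricSpace} (f : Homeo X) x : iterZ f 1 x = f x.
Proof. reflexivity. Qed.

Lemma cont_comp {X Y Z : MetricSpace} (h1 : X -> Y) (h2 : Y -> Z) :
  continuous_map h1 -> continuous_map h2 -> continuous_map (fun x => h2 (h1 x)).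
Proof.
  intros C1 C2 z _ e He.
  destruct (C2 (h1 z) I e He) as [d1 [Hd1 H1]].
  destruct (C1 z I d1 Hd1) as [d2 [Hd2 H2]].
  exists d2; split; auto.
Qed.

Lemma cont_ext {X Y : MetricSpace} (h1 h2 : X -> Y) :
  (forall x, h1 x = h2 x) -> continuous_map h1 -> continuous_map h2.
Proof.
  intros E C z _ e He. destruct (C z I e He) as [d [Hd H]].
  exists d; split; auto. intros w _ Hw. rewrite <- !E. auto.
Qed.

Lemma iterZ_cont {X : MetricSpace} (f : Homeo X) m : continuous_map (iterZ f m).
Proof.
  induction m using Z.peano_ind.
  - intros z _ e He. exists e; split; auto.
  - apply (cont_ext (fun x => f (iterZ f m x))).
    + intro x. rewrite <- Z.add_1_r, iterZ_succ. reflexivity.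
    + apply cont_comp; auto. apply hfun_cont.
  - apply (cont_ext (fun x => hinv f (iterZ f m x))).
    + intro x. rewrite <- Z.sub_1_r, iterZ_pred. reflexivity.
    + apply cont_comp; auto. apply hinv_cont.
Qed.

Lemma list_max_bound {X : Type} (N : X -> nat) (l : list X) :
  exists M, forall w, In w l -> (N w <= M)%nat.
Proof.
  induction l as [|a l [M HM]].
  - exists 0%nat. intros w [].
  - exists (Nat.max (N a) M). intros w [<-|Hw]; [lia|]. specialize (HM w Hw). lia.
Qed.

Lemma cluster {X : MetricSpace} : compact_space X -> forall u : nat -> X,
  exists w, forall eta, 0 < eta -> forall N, exists k, (N <= k)%nat /\ dist (u k) w < eta.
Proof.
  intros HC u. apply NNPP. intro Hn.
  assert (H : forall w, exists pr : R * nat, 0 < fst pr /\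
     forall k, (snd pr <= k)%nat -> fst pr <= dist (u k) w).
  { intro w. apply NNPP. intro H1. apply Hn. exists w. intros eta Heta N.
    apply NNPP. intro H2. apply H1. exists (eta, N). simpl. split; auto.
    intros k Hk. apply Rnot_lt_le. intro H3. apply H2. exists k. auto. }
  apply my_choice in H. destruct H as [G HG].
  destruct (HC X (fun w y => dist w y < fst (G w))) as [l Hl].
  - intros w y Hy. exists (fst (G w) - dist w y). split; [lra|].
    intros y' Hy'. pose proof (dist_tri X w y y'). lra.
  - intro w. exists w. destruct (HG w). replace (dist w w) with 0; auto.
    symmetry. apply dist_eq0. reflexivity.
  - destruct (list_max_bound (fun w => snd (G w)) l) as [M HM].
    destruct (Hl (u M)) as [w [Hw Hd]].
    destruct (HG w) as [_ H2]. specialize (H2 M (HM w Hw)).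
    rewrite dist_sym in H2. lra.
Qed.

Lemma closure_closed {X : MetricSpace} (A : X -> Prop) w :
  (forall eta, 0 < eta -> exists a, closure A a /\ dist w a < eta) -> closure A w.
Proof.
  intros H eta Heta. destruct (H (eta/2)) as [a [Ha Hd]]; [lra|].
  destruct (Ha (eta/2)) as [b [Hb Hd2]]; [lra|].
  exists b. split; auto. pose proof (dist_tri X w a b). lra.
Qed.

Lemma closure_orbit_inv {X : MetricSpace} (f : Homeo X) p z :
  closure (orbit f p) z -> closure (orbit f p) (f z).
Proof.
  intros Hz eta Heta.
  destruct (hfun_cont X f z I eta Heta) as [d [Hd H]].
  destruct (Hz d Hd) as [a [[n ->] Ha]].
  exists (f (iterZ f n p)). split.
  - exists (n + 1)%Z. rewrite iterZ_succ. reflexivity.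
  - apply H; auto.
Qed.

Lemma orbit_in_closure {X : MetricSpace} (f : Homeo X) p n :
  closure (orbit f p) (iterZ f n p).
Proof.
  intros eta Heta. exists (iterZ f n p). split. exists n; reflexivity.
  replace (dist _ _) with 0; auto. symmetry; apply dist_eq0; reflexivity.
Qed.

Lemma inv_INR_small eps : 0 < eps -> exists N, / INR (S N) < eps.
Proof.
  intros He. destruct (archimed_cor1 eps He) as [N [H1 H2]].
  exists N. eapply Rle_lt_trans; [|exact H1].
  apply Rinv_le_contravar. apply lt_0_INR; lia. apply le_INR; lia.
Qed.

Lemma inv_INR_mono k N : (N <= k)%nat -> / INR (S k) <= / INR (S N).
Proof.
  intros H. apply Rinv_le_contravar. apply lt_0_INR; lia. apply le_INR; lia.
Qed.

Lemma inv_INR_pos k : 0 < / INR (S k).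
Proof. apply Rinv_0_lt_compat. apply lt_0_INR; lia. Qed.

Lemma limit_lemma {X Y : MetricSpace} (f : Homeo X) (g : Homeo Y) (J : Y -> X) (d' : R)
  (HJ : forall a b, dist (J a) (J b) <= dist a b + d')
  (z : Y) (zs : nat -> Y) (a : nat -> X) (w : X) (Bd : R) :
  (forall k, dist z (zs k) < / INR (S k)) ->
  (forall k m, dist (iterZ f m (a k)) (J (iterZ g m (zs k))) <= Bd) ->
  (forall eta, 0 < eta -> forall N, exists k, (N <= k)%nat /\ dist (a k) w < eta) ->
  forall m, dist (iterZ f m w) (J (iterZ g m z)) <= Bd + d'.
Proof.
  intros Hz Hb Hcl m. apply Rnot_lt_le. intro Hlt.
  set (gam := dist (iterZ f m w) (J (iterZ g m z)) - (Bd + d')).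
  assert (Hg : 0 < gam/3) by (unfold gam; lra).
  destruct (iterZ_cont f m w I _ Hg) as [r1 [Hr1 H1]].
  destruct (iterZ_cont g m z I _ Hg) as [r2 [Hr2 H2]].
  destruct (inv_INR_small r2 Hr2) as [N HN].
  destruct (Hcl r1 Hr1 N) as [k [Hk Hak]].
  assert (E1 : dist (iterZ f m w) (iterZ f m (a k)) < gam/3).
  { apply H1; auto. rewrite dist_sym; auto. }
  assert (E2 : dist (iterZ g m z) (iterZ g m (zs k)) < gam/3).
  { apply H2; auto. pose proof (Hz k). pose proof (inv_INR_mono k N Hk). lra. }
  pose proof (Hb k m) as E3.
  pose proof (HJ (iterZ g m (zs k)) (iterZ g m z)) as E4.
  rewrite (dist_sym Y (iterZ g m (zs k))) in E4.
  pose proof (dist_tri X (iterZ f m w) (iterZ f m (a k)) (J (iterZ g m z))).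
  pose proof (dist_tri X (iterZ f m (a k)) (J (iterZ g m (zs k))) (J (iterZ g m z))).
  unfold gam in *. lra.
Qed.

Lemma uniq_lemma {X : MetricSpace} (f : Homeo X) (C : X -> Prop) c a b :
  expansive_on f C c -> C a -> C b ->
  (forall m, dist (iterZ f m a) (iterZ f m b) <= c) -> a = b.
Proof.
  intros He Ha Hb Hm. apply NNPP. intro Hne.
  destruct (He a b Ha Hb Hne) as [n Hn]. specialize (Hm n). lra.
Qed.

Lemma core {X Y : MetricSpace} (f : Homeo X) (g : Homeo Y) (J : Y -> X) (y0 : Y) (p : X)
  (c eps d' : R) :
  compact_space X -> 0 <= eps -> 0 <= d' -> 2 * (eps + d') + d' <= c ->
  expansive_on f (closure (orbit f p)) c ->
  (forall n, dist (iterZ f n p) (J (iterZ g n y0)) < eps) ->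
  (forall a b, dist (J a) (J b) <= dist a b + d') ->
  exists h : Y -> X,
    continuous_on (closure (orbit g y0)) h /\
    (forall z, closure (orbit g y0) z -> f (h z) = h (g z)) /\
    (forall z, closure (orbit g y0) z -> dist (h z) (J z) <= eps + d').
Proof.
  intros HX He Hd Hc Hexp Htr HJ.
  set (Sc := closure (orbit g y0)). set (C := closure (orbit f p)).
  set (K := eps + d').
  assert (Ex : forall z, Sc z -> exists w, C w /\
             forall m, dist (iterZ f m w) (J (iterZ g m z)) <= K).
  { intros z Hz.
    assert (Hn : forall k, exists n, dist z (iterZ g n y0) < / INR (S k)).
    { intro k. destruct (Hz _ (inv_INR_pos k)) as [a0 [[n ->] Ha]]. exists n; auto. }
    apply my_choice in Hn. destruct Hn as [nk Hnk].
    destruct (cluster HX (fun k => iterZ f (nk k) p)) as [w Hw].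
    exists w. split.
    - intros eta Heta. destruct (Hw eta Heta 0%nat) as [k [_ Hk]].
      exists (iterZ f (nk k) p). split. exists (nk k); reflexivity.
      rewrite dist_sym; auto.
    - apply (limit_lemma f g J d' HJ z (fun k => iterZ g (nk k) y0) (fun k => iterZ f (nk k) p) w eps); auto.
      intros k m. rewrite <- !iterZ_add. left. apply Htr. }
  assert (Ex2 : forall z, exists w, Sc z -> C w /\
             forall m, dist (iterZ f m w) (J (iterZ g m z)) <= K).
  { intro z. destruct (classic (Sc z)) as [Hz|Hz].
    - destruct (Ex z Hz) as [w Hw]. exists w; auto.
    - exists p. intro; contradiction. }
  apply my_choice in Ex2. destruct Ex2 as [h Hh].
  assert (Uq : forall a b K1 K2 z, C a -> C b -> K1 + K2 <= c ->
     (forall m, dist (iterZ f m a) (J (iterZ g m z)) <= K1) ->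
     (forall m, dist (iterZ f m b) (J (iterZ g m z)) <= K2) -> a = b).
  { intros a b K1 K2 z Ha Hb HK H1 H2. apply (uniq_lemma f C c a b Hexp Ha Hb).
    intro m. specialize (H1 m). specialize (H2 m).
    pose proof (dist_tri X (iterZ f m a) (J (iterZ g m z)) (iterZ f m b)).
    rewrite (dist_sym X (J _)) in H. lra. }
  exists h. split; [|split].
  -
    intros z Hz eta Heta. apply NNPP. intro Hn.
    assert (Hs : forall k, exists z', Sc z' /\ dist z z' < / INR (S k) /\ eta <= dist (h z) (h z')).
    { intro k. apply NNPP. intro H1. apply Hn. exists (/ INR (S k)). split.
      apply inv_INR_pos. intros w Hw Hdw. apply Rnot_le_lt. intro H2. apply H1.
      exists w. auto. }
    apply my_choice in Hs. destruct Hs as [zs Hzs].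
    destruct (cluster HX (fun k => h (zs k))) as [w Hw].
    assert (HwC : C w).
    { apply closure_closed. intros e He'. destruct (Hw e He' 0%nat) as [k [_ Hk]].
      exists (h (zs k)). split. apply (Hh (zs k)). apply Hzs. rewrite dist_sym; auto. }
    assert (Hwb := limit_lemma f g J d' HJ z zs (fun k => h (zs k)) w K
                 (fun k => proj1 (proj2 (Hzs k)))
                 (fun k m => proj2 (Hh (zs k) (proj1 (Hzs k))) m) Hw).
    assert (w = h z).
    { apply (Uq w (h z) (K + d') K z HwC (proj1 (Hh z Hz))); auto.
      unfold K; lra. apply (Hh z Hz). }
    subst w. destruct (Hw eta Heta 0%nat) as [k [_ Hk]].
    destruct (Hzs k) as [_ [_ H3]]. rewrite dist_sym in Hk. lra.
  - intros z Hz.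
    assert (Hgz : Sc (g z)) by (apply closure_orbit_inv; auto).
    destruct (Hh z Hz) as [HC1 Hb1]. destruct (Hh (g z) Hgz) as [HC2 Hb2].
    apply (Uq _ _ K K (g z) (closure_orbit_inv f p _ HC1) HC2); auto.
    unfold K; lra.
    intro m. rewrite <- iterZ_1, <- iterZ_add. replace (iterZ g m (g z)) with (iterZ g (m + 1) z).
    apply Hb1. rewrite iterZ_add. reflexivity.
  - intros z Hz. destruct (Hh z Hz) as [_ Hb]. apply (Hb 0%Z).
Qed.

Theorem theorem2p7 (X : MetricSpace) (f : Homeo X) (x : X) :
  compact_space X ->
  minimally_expansive f x -> shadowable f x ->
  topologically_stable f x /\ GH_stable f x.
Proof.
  intros HX [c [Hc Hme]] Hsh. split.
  - intros eps Heps.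
    set (e := Rmin eps (c/2)).
    assert (He : 0 < e) by (apply Rmin_glb_lt; lra).
    assert (He1 : e <= eps) by apply Rmin_l.
    assert (He2 : e <= c/2) by apply Rmin_r.
    destruct (Hsh e He) as [d [Hd Hs]].
    exists (d/2). split; [lra|]. intros g Hg.
    destruct (Hs (fun n => iterZ g n x)) as [p Hp].
    { split; [reflexivity|]. intro n. rewrite iterZ_succ.
      specialize (Hg (iterZ g n x)). lra. }
    assert (Hexp : expansive_on f (closure (orbit f p)) c).
    { apply Hme. unfold ball. specialize (Hp 0%Z). simpl in Hp.
      rewrite dist_sym. lra. }
    destruct (core f g (fun z => z) x p c e 0 HX) as [h [H1 [H2 H3]]]; auto; try lra.
    intros a b; lra.
    exists h. split; auto. split; auto. intros z Hz. specialize (H3 z Hz). lra.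
  - intros eps Heps.
    set (e := Rmin (eps/2) (c/5)).
    assert (He : 0 < e) by (apply Rmin_glb_lt; lra).
    assert (He1 : e <= eps/2) by apply Rmin_l.
    assert (He2 : e <= c/5) by apply Rmin_r.
    destruct (Hsh e He) as [d [Hd Hs]].
    exists (Rmin d e). split. apply Rmin_glb_lt; lra.
    intros Y g HY [d' [[Hpos [i [j [Hi [Hj [Hgi Hjg]]]]]] Hlt]].
    assert (Hd1 : d' < d) by (pose proof (Rmin_l d e); lra).
    assert (Hd2 : d' < e) by (pose proof (Rmin_r d e); lra).
    destruct Hj as [hh [s [Hh [Hsl Hmax]]]].
    assert (HJ : forall a b, dist (j a) (j b) <= dist a b + d').
    { intros a b. destruct Hsl as [Hub _].
      assert (Rabs (dist (j a) (j b) - dist a b) <= s) by (apply Hub; eauto).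
      pose proof (Rle_abs (dist (j a) (j b) - dist a b)).
      pose proof (Rmax_r hh s). lra. }
    destruct Hjg as [s2 [[Hub2 _] Hs2]].
    exists j. split.
    { exists hh, s. split; auto. split; auto. lra. }
    intros y Hy.
    destruct (Hs (fun n => j (iterZ g n y))) as [p Hp].
    { split; [simpl; exact Hy|]. intro n. rewrite iterZ_succ.
      assert (dist (j (g (iterZ g n y))) (f (j (iterZ g n y))) <= s2) by (apply Hub2; eauto).
      rewrite dist_sym. lra. }
    assert (Hexp : expansive_on f (closure (orbit f p)) c).
    { apply Hme. unfold ball. specialize (Hp 0%Z). simpl in Hp. rewrite Hy in Hp.
      rewrite dist_sym. lra. }
    destruct (core f g j y p c e d' HX) as [h [H1 [H2 H3]]]; auto; try lra.
    exists h. split; auto. split; auto. intros z Hz. specialize (H3 z Hz). lra.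
Qed.
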